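(* Let $I:(0,1)\to(0,1)$ be a nondecreasing function. Then $\|S_If\|_{L^\infty}\lesssim\|f\|_{L^\infty}$ and $\|S_If\|_{m_I}\lesssim\|f\|_{m_I}$ for all $f\in\mathcal M_+(0,1)$; that is, $S_I$ is bounded on $L^\infty$ and on $m_I$.
   Context: $\mathcal M_+(0,1)$: nonnegative measurable functions on $(0,1)$; $f^*$ the nonincreasing rearrangement. $S_If(t)=\frac1{I(t)}\sup_{0<s\le t}I(s)f^*(s)$ for $t\in(0,1)$. $\|f\|_{m_I}=\sup_{0<t<1}I(t)f^*(t)$. $A\lesssim B$ means $A\le CB$ with $C$ independent of $f$. *)

(* Defs.v *)
From HB Require Import structures.
From mathcomp Require Import all_boot all_order all_algebra.
From mathcomp Require Import all_classical all_reals all_analysis measurable_realfun.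
Set Implicit Arguments. Unset Strict Implicit. Unset Printing Implicit Defensive.
Import Order.TTheory GRing.Theory Num.Theory.
Local Open Scope classical_set_scope.
Local Open Scope ring_scope.

Section Defs.
Context {R : realType}.
Local Open Scope ereal_scope.

Definition distrib (f : R -> \bar R) (lam : \bar R) : \bar R :=
  (@lebesgue_measure R) ([set x | (0 < x < 1)%R] `&` [set x | lam < f x]).

Definition rearr (f : R -> \bar R) (t : R) : \bar R :=
  ereal_inf [set lam : \bar R | 0 <= lam /\ distrib f lam <= t%:E].

Definition S_op (I : R -> R) (f : R -> \bar R) (t : R) : \bar R :=
  ((I t)^-1)%:E * ereal_sup [set (I s)%:E * rearr f s | s in [set s | (0 < s <= t)%R]].

Definition mI_norm (I : R -> R) (g : R -> \bar R) : \bar R :=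
  ereal_sup [set (I t)%:E * rearr g t | t in [set t | (0 < t < 1)%R]].

Definition Linf_norm (g : R -> \bar R) : \bar R :=
  ereal_inf [set lam : \bar R | 0 <= lam /\ distrib g lam = 0].

End Defs.

(* Main.v *)
Require Import Defs.
From HB Require Import structures.
From mathcomp Require Import all_boot all_order all_algebra.
From mathcomp Require Import all_classical all_reals all_analysis measurable_realfun.
Import Order.TTheory GRing.Theory Num.Theory.
Local Open Scope classical_set_scope.
Local Open Scope ring_scope.

Lemma leb_mono (R : realType) (A B : set R) : A `<=` B ->
  (@lebesgue_measure R A <= @lebesgue_measure R B)%E.
Proof.
move=> AB; rewrite /lebesgue_measure /lebesgue_stieltjes_measure /measure_extension /=.
exact: le_outer_measure.
Qed.

Lemma rearr_ge0 (R : realType) (f : R -> \bar R) s : (0 <= rearr f s)%E.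
Proof. by apply: le_ereal_inf_tmp => y [] . Qed.

Lemma rearr_le_Linf (R : realType) (f : R -> \bar R) s (lam : \bar R) :
  0 < s -> (0 <= lam)%E -> distrib f lam = 0%E -> (rearr f s <= lam)%E.
Proof.
move=> s0 l0 d0; apply: ereal_inf_lbound; split => //.
by rewrite d0 lee_fin ltW.
Qed.

Lemma S_bound (R : realType) (I : R -> R) (f : R -> \bar R) x (M : \bar R) :
  0 < I x ->
  (forall s, 0 < s <= x -> ((I s)%:E * rearr f s <= M)%E) ->
  (S_op I f x <= ((I x)^-1)%:E * M)%E.
Proof.
move=> Ix0 H; rewrite /S_op; apply: lee_wpmul2l.
  by rewrite lee_fin invr_ge0 ltW.
by apply: ge_ereal_sup => y [s hs <-]; apply: H.
Qed.

Theorem theorem3p4 (R : realType) (I : R -> R)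
  (hI : forall t : R, 0 < t < 1 -> 0 < I t < 1)
  (hmono : forall s t : R, 0 < s -> s <= t -> t < 1 -> I s <= I t) :
  exists C : R, 0 < C /\
    forall f : R -> \bar R,
      measurable_fun [set x : R | 0 < x < 1] f ->
      (forall x : R, 0 < x < 1 -> (0 <= f x)%E) ->
      (Linf_norm (S_op I f) <= C%:E * Linf_norm f)%E /\
      (mI_norm I (S_op I f) <= C%:E * mI_norm I f)%E.
Proof.
exists 1; split => // f _ _; rewrite mul1e; split.
- apply: ereal_inf_le_tmp => lam [l0 d0]; split => //.
  rewrite /distrib.
  suff -> : [set x | 0 < x < 1] `&` [set x | (lam < S_op I f x)%E] = set0.
    exact: measure0.
  apply/seteqP; split => [x [/andP[x0 x1]]|//]; rewrite /set0 /=.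
  have /andP[Ix0 Ix1] := hI x (introT andP (conj x0 x1)).
  case: lam l0 d0 => [l| |] l0 d0; last by [].
  + have : (S_op I f x <= ((I x)^-1)%:E * ((I x)%:E * l%:E))%E.
      apply: S_bound => // s /andP[s0 sx].
      apply: lee_pmul => //; first by rewrite lee_fin ltW //; case/andP: (hI s (introT andP (conj s0 (le_lt_trans sx x1)))).
        exact: rearr_ge0.
        by rewrite lee_fin; apply: hmono.
      exact: rearr_le_Linf.
    rewrite muleA -EFinM mulVf ?gt_eqF // mul1r => h1 h2.
    by have := lt_le_trans h2 h1; rewrite ltxx.
  + by move=> h; have := lt_le_trans h (leey _); rewrite ltxx.
- have hM0 : (0 <= mI_norm I f)%E.
    have h12 : 0 < (1/2 : R) < 1.
      by apply/andP; split; [rewrite divr_gt0 | rewrite mul1r invf_lt1 // ltr1n].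
    have hI12 := hI _ h12; case/andP: hI12 => hI12 _.
    apply: le_trans (_ : ((I (1/2))%:E * rearr f (1/2) <= _)%E).
      by apply: mule_ge0; [rewrite lee_fin ltW | exact: rearr_ge0].
    by apply: ereal_sup_ubound; exists (1/2).
  rewrite mul1e.
  have hSb : forall x, 0 < x < 1 ->
      (S_op I f x <= ((I x)^-1)%:E * mI_norm I f)%E.
    move=> x /andP[x0 x1]; have /andP[Ix0 _] := hI x (introT andP (conj x0 x1)).
    apply: S_bound => // s /andP[s0 sx].
    by apply: ereal_sup_ubound; exists s => //=; rewrite s0 (le_lt_trans sx x1).
  case E : (mI_norm I f) hM0 hSb => [m| |] hM0 hSb; last by [].
  - apply: ge_ereal_sup => y [t /andP[t0 t1] <-].
    have /andP[It0 It1] := hI t (introT andP (conj t0 t1)).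
    have hm : 0 <= m by rewrite -lee_fin.
    have -> : m%:E = ((I t)%:E * (m / I t)%:E)%E.
      by rewrite -EFinM mulrC -mulrA mulVf ?gt_eqF // mulr1.
    apply: lee_wpmul2l; first by rewrite lee_fin ltW.
    apply: ereal_inf_lbound; split.
      by rewrite lee_fin divr_ge0 // ltW.
    rewrite /distrib.
    have := @lebesgue_measure_itv R `]0, t[; rewrite /= lte_fin t0 sube0 => <-.
      apply: leb_mono => x [/andP[x0 x1]] /= hlt.
      rewrite in_itv /= x0 /=.
      rewrite ltNge; apply/negP => tx.
      have /andP[Ix0 _] := hI x (introT andP (conj x0 x1)).
      have := lt_le_trans hlt (hSb x (introT andP (conj x0 x1))).
      rewrite -EFinM lte_fin mulrC => h.
      have : (I x)^-1 * m <= (I t)^-1 * m.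
        apply: ler_wpM2r => //.
        by rewrite lef_pV2 ?posrE // hmono.
      by rewrite leNgt h.
  - by rewrite leey.
Qed.
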